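(* Let $a,b,c$ be pairwise distinct positive real numbers, and let $G_1$ and $G_2$ be the metric graphs described in the context, each equipped with the Laplacian $\Delta$ under Dirichlet standard boundary conditions. Then: (i) $G_1$ and $G_2$ are isospectral, i.e. $-\Delta$ has the same eigenvalues, counted with multiplicity, on $G_1$ and on $G_2$; (ii) $G_1$ and $G_2$ are not isometric; (iii) $T(G_1)\neq T(G_2)$, where $T$ denotes torsional rigidity.
   Context: A compact metric graph is a finite connected graph without loops in which each edge $e$ is identified with an interval $[0,l_e]$, $l_e>0$, with coordinate $x_e$. A function $\phi$ on the graph is a collection $\phi=\oplus_e \phi_e$ of functions on the edges. The Laplacian $\Delta$ acts as $(\Delta\phi)_e=\phi_e''$ on each edge. Dirichlet standard boundary conditions (DSBC) require that $\phi_e,\phi_e'$ be absolutely continuous with $\phi_e''\in L^2$ on every edge, together with the following vertex conditions: - $\phi$ is continuous at every vertex of degree $\geq 2$; - $\phi(v)=0$ at every vertex $v$ of degree $1$; - at every vertex $v$ of degree $\ne 1$, the sum over the edges incident to $v$ of the derivatives of $\phi$ taken in the direction pointing into $v$ is $0$ (Kirchhoff condition). With DSBC, $\Delta$ is self-adjoint with discrete spectrum. The torsional rigidity of such a graph $G$ is $T(G)=\int_G u(x)\,dx$, where $u$ is the unique function satisfying DSBC with $u_e''=-1$ on every edge. The graph $G_1$ has 16 vertices: - a central vertex $o$; - three vertices $m_1,m_2,m_3$; - three vertices $w_1,w_2,w_3$; - nine vertices of degree one. The edges of $G_1$ are: - $o m_1$ of length $2c$, $o m_2$ of length $2a$, $o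 m_3$ of length $2b$; - $m_1 w_1$ of length $2b$, $m_2 w_2$ of length $2c$, $m_3 w_3$ of length $2a$; - a pendant edge (ending at a degree-one vertex) at $m_1$ of length $a$, at $m_2$ of length $b$, and at $m_3$ of length $c$; - two pendant edges at $w_1$ of lengths $a$ and $c$, two at $w_2$ of lengths $a$ and $b$, and two at $w_3$ of lengths $b$ and $c$. The graph $G_2$ is obtained from $G_1$ by interchanging the roles of $b$ and $c$. Explicitly, its edges are: - $o m_1$ of length $2b$, $o m_2$ of length $2a$, $o m_3$ of length $2c$; - $m_1w_1$ of length $2c$, $m_2w_2$ of length $2b$, $m_3w_3$ of length $2a$; - a pendant edge at $m_1$ of length $a$, at $m_2$ of length $c$, and at $m_3$ of length $b$; - two pendant edges at $w_1$ of lengths $a,b$, at $w_2$ of lengths $a,c$, and at $w_3$ of lengths $c,b$. (These are the quantum graph analogs, with degree-two vertices removed, of the $7_1$ pair of isospectral planar domains of Buser–Conway–Doyle–Semmler.) *)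

(* Defs.v *)
From Stdlib Require Import Reals List Arith.
Import ListNotations.
Open Scope R_scope.

(* A metric graph: vertices 0..nV-1, edges listed as (source, target, length).
   Edge e is identified with [0, len e]; coordinate 0 sits at src e and
   coordinate len e at tgt e. *)
Record mgraph := MGraph { nV : nat; edges : list (nat * nat * R) }.

Definition nE (G : mgraph) : nat := length (edges G).
Definition src (G : mgraph) (e : nat) : nat := fst (fst (nth e (edges G) (0%nat, 0%nat, 0))).
Definition tgt (G : mgraph) (e : nat) : nat := snd (fst (nth e (edges G) (0%nat, 0%nat, 0))).
Definition len (G : mgraph) (e : nat) : R := snd (nth e (edges G) (0%nat, 0%nat, 0)).

Fixpoint rsum (n : nat) (f : nat -> R) : R :=
  match n with O => 0 | S k => rsum k f + f k end.
Fixpoint nsum (n : nat) (f : nat -> nat) : nat :=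
  match n with O => O | S k => (nsum k f + f k)%nat end.

Definition incident (G : mgraph) (e v : nat) : Prop := src G e = v \/ tgt G e = v.

Definition deg (G : mgraph) (v : nat) : nat :=
  nsum (nE G) (fun e => ((if Nat.eqb (src G e) v then 1 else 0)
                        + (if Nat.eqb (tgt G e) v then 1 else 0))%nat).

(* value at vertex v of the edge function phi e (e incident to v, no loops) *)
Definition endval (G : mgraph) (phi : nat -> R -> R) (e v : nat) : R :=
  if Nat.eqb (src G e) v then phi e 0 else phi e (len G e).

(* derivative of phi e at v taken in the direction pointing into v *)
Definition inward_der (G : mgraph) (dphi : nat -> R -> R) (e v : nat) : R :=
  (if Nat.eqb (src G e) v then - dphi e 0 else 0)
  + (if Nat.eqb (tgt G e) v then dphi e (len G e) else 0).

Definition DSBC_vertex (G : mgraph) (phi dphi : nat -> R -> R) : Prop :=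
  (forall v, (v < nV G)%nat -> (2 <= deg G v)%nat ->
     forall e1 e2, (e1 < nE G)%nat -> (e2 < nE G)%nat ->
       incident G e1 v -> incident G e2 v -> endval G phi e1 v = endval G phi e2 v)
  /\ (forall v, (v < nV G)%nat -> deg G v = 1%nat ->
       forall e, (e < nE G)%nat -> incident G e v -> endval G phi e v = 0)
  /\ (forall v, (v < nV G)%nat -> deg G v <> 1%nat ->
       rsum (nE G) (fun e => inward_der G dphi e v) = 0).

(* Regularity: each phi e is (the restriction to [0, len e] of) a twice
   differentiable function, with derivatives dphi e, ddphi e. *)
Definition twice_diff (phi dphi ddphi : nat -> R -> R) : Prop :=
  (forall e x, derivable_pt_lim (phi e) x (dphi e x)) /\
  (forall e x, derivable_pt_lim (dphi e) x (ddphi e x)).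

(* phi is an eigenfunction of -Delta with DSBC for eigenvalue lam
   (nonvanishing is imposed through linear independence below). *)
Definition eig_solution (G : mgraph) (lam : R) (phi dphi ddphi : nat -> R -> R) : Prop :=
  twice_diff phi dphi ddphi /\
  (forall e x, (e < nE G)%nat -> 0 <= x <= len G e -> - ddphi e x = lam * phi e x) /\
  DSBC_vertex G phi dphi.

Definition mult_ge (G : mgraph) (lam : R) (n : nat) : Prop :=
  exists Phi dPhi ddPhi : nat -> nat -> R -> R,
    (forall i, (i < n)%nat -> eig_solution G lam (Phi i) (dPhi i) (ddPhi i)) /\
    (forall c : nat -> R,
       (forall e x, (e < nE G)%nat -> 0 <= x <= len G e ->
          rsum n (fun i => c i * Phi i e x) = 0) ->
       forall i, (i < n)%nat -> c i = 0).

Definition isospectral (G1 G2 : mgraph) : Prop :=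
  forall (lam : R) (n : nat), mult_ge G1 lam n <-> mult_ge G2 lam n.

Definition isometric (G1 G2 : mgraph) : Prop :=
  nV G1 = nV G2 /\ nE G1 = nE G2 /\
  exists (fV fE : nat -> nat),
    (forall v, (v < nV G1)%nat -> (fV v < nV G2)%nat) /\
    (forall v w, (v < nV G1)%nat -> (w < nV G1)%nat -> fV v = fV w -> v = w) /\
    (forall e, (e < nE G1)%nat -> (fE e < nE G2)%nat) /\
    (forall e f, (e < nE G1)%nat -> (f < nE G1)%nat -> fE e = fE f -> e = f) /\
    (forall e, (e < nE G1)%nat ->
       len G2 (fE e) = len G1 e /\
       ((src G2 (fE e) = fV (src G1 e) /\ tgt G2 (fE e) = fV (tgt G1 e)) \/
        (src G2 (fE e) = fV (tgt G1 e) /\ tgt G2 (fE e) = fV (src G1 e)))).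

Definition torsion_solution (G : mgraph) (u du ddu : nat -> R -> R) : Prop :=
  twice_diff u du ddu /\
  (forall e x, (e < nE G)%nat -> 0 <= x <= len G e -> ddu e x = -1) /\
  DSBC_vertex G u du.

Definition torsional_rigidity_is (G : mgraph) (T : R) : Prop :=
  exists (u du ddu : nat -> R -> R) (I : nat -> R),
    torsion_solution G u du ddu /\
    (forall e, (e < nE G)%nat ->
       exists pr : Riemann_integrable (u e) 0 (len G e), RiemannInt pr = I e) /\
    T = rsum (nE G) I.

(* vertices: o = 0; m1,m2,m3 = 1,2,3; w1,w2,w3 = 4,5,6; degree-one 7..15 *)
Definition G1 (a b c : R) : mgraph := MGraph 16
  [ (0%nat,1%nat,2*c); (0%nat,2%nat,2*a); (0%nat,3%nat,2*b);
    (1%nat,4%nat,2*b); (2%nat,5%nat,2*c); (3%nat,6%nat,2*a);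
    (1%nat,7%nat,a); (2%nat,8%nat,b); (3%nat,9%nat,c);
    (4%nat,10%nat,a); (4%nat,11%nat,c); (5%nat,12%nat,a); (5%nat,13%nat,b); (6%nat,14%nat,b); (6%nat,15%nat,c) ].

Definition G2 (a b c : R) : mgraph := MGraph 16
  [ (0%nat,1%nat,2*b); (0%nat,2%nat,2*a); (0%nat,3%nat,2*c);
    (1%nat,4%nat,2*c); (2%nat,5%nat,2*b); (3%nat,6%nat,2*a);
    (1%nat,7%nat,a); (2%nat,8%nat,c); (3%nat,9%nat,b);
    (4%nat,10%nat,a); (4%nat,11%nat,b); (5%nat,12%nat,a); (5%nat,13%nat,c); (6%nat,14%nat,c); (6%nat,15%nat,b) ].

(* Main.v *)
Require Import Defs.
From Stdlib Require Import Reals List Arith Lra Lia.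
Open Scope R_scope.

Definition Eqs (a b c : R) (p dp : nat -> R -> R) : Prop :=
  (p 0%nat 0 = p 1%nat 0 /\ p 1%nat 0 = p 2%nat 0) /\
  (p 0%nat (2*c) = p 3%nat 0 /\ p 3%nat 0 = p 6%nat 0) /\
  (p 1%nat (2*a) = p 4%nat 0 /\ p 4%nat 0 = p 7%nat 0) /\
  (p 2%nat (2*b) = p 5%nat 0 /\ p 5%nat 0 = p 8%nat 0) /\
  (p 3%nat (2*b) = p 9%nat 0 /\ p 9%nat 0 = p 10%nat 0) /\
  (p 4%nat (2*c) = p 11%nat 0 /\ p 11%nat 0 = p 12%nat 0) /\
  (p 5%nat (2*a) = p 13%nat 0 /\ p 13%nat 0 = p 14%nat 0) /\
  (p 6%nat a = 0 /\ p 7%nat b = 0 /\ p 8%nat c = 0 /\ p 9%nat a = 0 /\ p 10%nat c = 0 /\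
   p 11%nat a = 0 /\ p 12%nat b = 0 /\ p 13%nat b = 0 /\ p 14%nat c = 0) /\
  (dp 0%nat 0 + dp 1%nat 0 + dp 2%nat 0 = 0 /\
   dp 0%nat (2*c) = dp 3%nat 0 + dp 6%nat 0 /\
   dp 1%nat (2*a) = dp 4%nat 0 + dp 7%nat 0 /\
   dp 2%nat (2*b) = dp 5%nat 0 + dp 8%nat 0 /\
   dp 3%nat (2*b) = dp 9%nat 0 + dp 10%nat 0 /\
   dp 4%nat (2*c) = dp 11%nat 0 + dp 12%nat 0 /\
   dp 5%nat (2*a) = dp 13%nat 0 + dp 14%nat 0).

Ltac ninc H := unfold incident in H; cbn in H; lia.

Lemma DSBC_G1_to (a b c : R) p dp : DSBC_vertex (G1 a b c) p dp -> Eqs a b c p dp.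
Proof.
  intros [Hc [Hd Hk]].
  assert (C : forall v e1 e2, (v < 16)%nat -> (e1 < 15)%nat -> (e2 < 15)%nat ->
     (2 <= deg (G1 a b c) v)%nat -> incident (G1 a b c) e1 v -> incident (G1 a b c) e2 v ->
     endval (G1 a b c) p e1 v = endval (G1 a b c) p e2 v) by (intros; apply Hc; auto).
  assert (D : forall v e, (v < 16)%nat -> (e < 15)%nat -> deg (G1 a b c) v = 1%nat ->
     incident (G1 a b c) e v -> endval (G1 a b c) p e v = 0) by (intros; eapply Hd; eauto).
  assert (K : forall v, (v < 16)%nat -> deg (G1 a b c) v <> 1%nat ->
     rsum (nE (G1 a b c)) (fun e => inward_der (G1 a b c) dp e v) = 0) by (intros; apply Hk; auto).
  Ltac ci C v e1 e2 := let H := fresh in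
    assert (H := C v e1 e2 ltac:(lia) ltac:(lia) ltac:(lia) ltac:(cbn; lia)
                     ltac:(unfold incident; cbn; lia) ltac:(unfold incident; cbn; lia)); cbn in H.
  Ltac di D v e := let H := fresh in
    assert (H := D v e ltac:(lia) ltac:(lia) ltac:(reflexivity) ltac:(unfold incident; cbn; lia)); cbn in H.
  Ltac ki K v := let H := fresh in
    assert (H := K v ltac:(lia) ltac:(cbn; lia)); unfold nE, inward_der, src, tgt, len in H; cbn in H.
  ci C 0%nat 0%nat 1%nat. ci C 0%nat 1%nat 2%nat.
  ci C 1%nat 0%nat 3%nat. ci C 1%nat 3%nat 6%nat.
  ci C 2%nat 1%nat 4%nat. ci C 2%nat 4%nat 7%nat.
  ci C 3%nat 2%nat 5%nat. ci C 3%nat 5%nat 8%nat.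
  ci C 4%nat 3%nat 9%nat. ci C 4%nat 9%nat 10%nat.
  ci C 5%nat 4%nat 11%nat. ci C 5%nat 11%nat 12%nat.
  ci C 6%nat 5%nat 13%nat. ci C 6%nat 13%nat 14%nat.
  di D 7%nat 6%nat. di D 8%nat 7%nat. di D 9%nat 8%nat. di D 10%nat 9%nat. di D 11%nat 10%nat.
  di D 12%nat 11%nat. di D 13%nat 12%nat. di D 14%nat 13%nat. di D 15%nat 14%nat.
  ki K 0%nat. ki K 1%nat. ki K 2%nat. ki K 3%nat. ki K 4%nat. ki K 5%nat. ki K 6%nat.
  unfold Eqs; repeat split; lra.
Qed.

Ltac edge_cases e :=
  do 15 (destruct e as [|e]; [unfold incident, endval, src, tgt, len in *; cbn in *; first [lia | lra] |]); lia.

Lemma DSBC_G1_from (a b c : R) p dp : Eqs a b c p dp -> DSBC_vertex (G1 a b c) p dp.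
Proof.
  unfold Eqs; intros H.
  decompose [and] H; clear H.
  split; [|split].
  - intros v Hv Hdeg e1 e2 He1 He2 I1 I2. cbn in Hv, He1, He2.
    destruct v as [|v].
    { assert (HX : forall e, (e < 15)%nat -> incident (G1 a b c) e 0%nat -> endval (G1 a b c) p e 0%nat = p 0%nat 0) by (intros e He I; edge_cases e).
      rewrite (HX e1), (HX e2); auto. }
    destruct v as [|v].
    { assert (HX : forall e, (e < 15)%nat -> incident (G1 a b c) e 1%nat -> endval (G1 a b c) p e 1%nat = p 3%nat 0) by (intros e He I; edge_cases e).
      rewrite (HX e1), (HX e2); auto. }
    destruct v as [|v].
    { assert (HX : forall e, (e < 15)%nat -> incident (G1 a b c) e 2%nat -> endval (G1 a b c) p e 2%nat = p 4%nat 0) by (intros e He I; edge_cases e).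
      rewrite (HX e1), (HX e2); auto. }
    destruct v as [|v].
    { assert (HX : forall e, (e < 15)%nat -> incident (G1 a b c) e 3%nat -> endval (G1 a b c) p e 3%nat = p 5%nat 0) by (intros e He I; edge_cases e).
      rewrite (HX e1), (HX e2); auto. }
    destruct v as [|v].
    { assert (HX : forall e, (e < 15)%nat -> incident (G1 a b c) e 4%nat -> endval (G1 a b c) p e 4%nat = p 9%nat 0) by (intros e He I; edge_cases e).
      rewrite (HX e1), (HX e2); auto. }
    destruct v as [|v].
    { assert (HX : forall e, (e < 15)%nat -> incident (G1 a b c) e 5%nat -> endval (G1 a b c) p e 5%nat = p 11%nat 0) by (intros e He I; edge_cases e).
      rewrite (HX e1), (HX e2); auto. }
    destruct v as [|v].
    { assert (HX : forall e, (e < 15)%nat -> incident (G1 a b c) e 6%nat -> endval (G1 a b c) p e 6%nat = p 13%nat 0) by (intros e He I; edge_cases e).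
      rewrite (HX e1), (HX e2); auto. }
    exfalso. do 9 (destruct v as [|v]; [cbn in Hdeg; lia|]). lia.
  - intros v Hv Hdeg e He I. cbn in Hv, He.
    do 7 (destruct v as [|v]; [cbn in Hdeg; lia|]).
    do 9 (destruct v as [|v]; [edge_cases e|]). lia.
  - intros v Hv Hdeg. cbn in Hv.
    do 7 (destruct v as [|v]; [unfold nE, inward_der, src, tgt, len; cbn; lra|]).
    exfalso. do 9 (destruct v as [|v]; [cbn in Hdeg; lia|]). lia.
Qed.

Definition pw (f h : R -> R) (m x : R) : R := if Rle_dec x m then f x else h x.

Lemma pw_le f h m x : x <= m -> pw f h m x = f x.
Proof. intros; unfold pw; destruct (Rle_dec x m); [auto|lra]. Qed.
Lemma pw_gt f h m x : m < x -> pw f h m x = h x.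
Proof. intros; unfold pw; destruct (Rle_dec x m); [lra|auto]. Qed.

Lemma deriv_local (f g : R -> R) x l d : 0 < d ->
  (forall y, Rabs (y - x) < d -> g y = f y) ->
  derivable_pt_lim f x l -> derivable_pt_lim g x l.
Proof.
  intros Hd Hloc Hf eps Heps.
  destruct (Hf eps Heps) as [del Hdel].
  assert (Hm : 0 < Rmin del d) by (apply Rmin_pos; [apply (cond_pos del)|lra]).
  exists (mkposreal _ Hm). intros hh Hh0 Hh. simpl in Hh.
  rewrite (Hloc (x + hh)), (Hloc x).
  - apply Hdel; auto. apply Rlt_le_trans with (1 := Hh). apply Rmin_l.
  - rewrite Rminus_diag, Rabs_R0; lra.
  - replace (x + hh - x) with hh by ring. apply Rlt_le_trans with (1 := Hh). apply Rmin_r.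
Qed.

Lemma pw_deriv (f h f' h' : R -> R) m :
  (forall x, derivable_pt_lim f x (f' x)) -> (forall x, derivable_pt_lim h x (h' x)) ->
  f m = h m -> f' m = h' m -> forall x, derivable_pt_lim (pw f h m) x (pw f' h' m x).
Proof.
  intros Hf Hh E E' x.
  destruct (Rtotal_order x m) as [Hlt|[Heq|Hgt]].
  - rewrite pw_le by lra. apply (deriv_local f _ x _ (m - x)); [lra| |auto].
    intros y Hy. apply pw_le. apply Rabs_def2 in Hy. lra.
  - subst x. rewrite pw_le by lra. intros eps Heps.
    destruct (Hf m eps Heps) as [d1 H1]. destruct (Hh m eps Heps) as [d2 H2].
    assert (Hm : 0 < Rmin d1 d2) by (apply Rmin_pos; [apply (cond_pos d1)|apply (cond_pos d2)]).
    exists (mkposreal _ Hm). intros hh Hh0 Hhh. simpl in Hhh.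
    rewrite (pw_le f h m m) by lra.
    destruct (Rle_dec hh 0).
    + rewrite pw_le by lra. apply H1; auto. apply Rlt_le_trans with (1 := Hhh). apply Rmin_l.
    + rewrite pw_gt by lra. rewrite E, E'. apply H2; auto. apply Rlt_le_trans with (1 := Hhh). apply Rmin_r.
  - rewrite pw_gt by lra. apply (deriv_local h _ x _ (x - m)); [lra| |auto].
    intros y Hy. apply pw_gt. apply Rabs_def2 in Hy. lra.
Qed.


Lemma deriv_ext (f g : R -> R) x l l' :
  (forall y, g y = f y) -> derivable_pt_lim f x l -> l = l' -> derivable_pt_lim g x l'.
Proof. intros Hfg Hf <-. apply (deriv_local f g x l 1); auto; lra. Qed.

Lemma refl_deriv (g g' : R -> R) L sg sg' : sg' = - sg ->
  (forall y, derivable_pt_lim g y (g' y)) ->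
  forall s, derivable_pt_lim (fun s => sg * g (L - s)) s (sg' * g' (L - s)).
Proof.
  intros Hs Hg s.
  apply (deriv_ext (mult_real_fct sg (comp g (fct_cte L - id)%F)) _ s (sg * (g' (L - s) * (0 - 1)))).
  - intros y; reflexivity.
  - apply derivable_pt_lim_scal. apply derivable_pt_lim_comp.
    + apply derivable_pt_lim_minus; [apply derivable_pt_lim_const|apply derivable_pt_lim_id].
    + apply Hg.
  - subst; ring.
Qed.

Lemma lin3_deriv (g1 g2 g3 : R -> R) k1 k2 k3 s l1 l2 l3 :
  derivable_pt_lim g1 s l1 -> derivable_pt_lim g2 s l2 -> derivable_pt_lim g3 s l3 ->
  derivable_pt_lim (fun s => k1 * g1 s + k2 * g2 s + k3 * g3 s) s (k1 * l1 + k2 * l2 + k3 * l3).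
Proof.
  intros H1 H2 H3.
  apply (deriv_ext ((mult_real_fct k1 g1 + mult_real_fct k2 g2) + mult_real_fct k3 g3)%F _ s (k1 * l1 + k2 * l2 + k3 * l3)); auto.
  repeat apply derivable_pt_lim_plus; apply derivable_pt_lim_scal; auto.
Qed.

Lemma reflf_deriv (h h' : R -> R) L sg sg' : sg' = - sg ->
  (forall y, derivable_pt_lim h y (h' y)) ->
  forall s, derivable_pt_lim (fun s => sg * h (L - s)) s ((fun s => sg' * h' (L - s)) s).
Proof. intros; apply refl_deriv; auto. Qed.

Definition arm (a b c sg : R) (f : nat -> R -> R) (x p : nat) (s : R) : R :=
  match x, p with
  | 1%nat, 0%nat => f 1%nat s | 1%nat, 2%nat => sg * f 1%nat (2*a - s) | 1%nat, 3%nat => f 5%nat s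
  | 1%nat, 6%nat => sg * f 5%nat (2*a - s) | 1%nat, 1%nat => f 6%nat s | 1%nat, 4%nat => f 9%nat s | 1%nat, 5%nat => f 11%nat s
  | 2%nat, 0%nat => f 2%nat s | 2%nat, 3%nat => sg * f 2%nat (2*b - s) | 2%nat, 1%nat => f 3%nat s
  | 2%nat, 4%nat => sg * f 3%nat (2*b - s) | 2%nat, 2%nat => f 7%nat s | 2%nat, 5%nat => f 12%nat s | 2%nat, 6%nat => f 13%nat s
  | 3%nat, 0%nat => f 0%nat s | 3%nat, 1%nat => sg * f 0%nat (2*c - s) | 3%nat, 2%nat => f 4%nat s
  | 3%nat, 5%nat => sg * f 4%nat (2*c - s) | 3%nat, 3%nat => f 8%nat s | 3%nat, 4%nat => f 10%nat s | 3%nat, 6%nat => f 14%nat s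
  | _, _ => 0
  end.

Definition Acomb (a b c sg : R) (f : nat -> R -> R) (x q : nat) (s : R) : R :=
  let r := fun p => arm a b c sg f x p s in
  match q with
  | 0%nat => -1 * r 1%nat + -1 * r 2%nat + -1 * r 3%nat
  | 1%nat => -1 * r 0%nat + 1 * r 2%nat + -1 * r 4%nat
  | 2%nat => -1 * r 0%nat + 1 * r 1%nat + -1 * r 6%nat
  | 3%nat => -1 * r 0%nat + 1 * r 3%nat + -1 * r 5%nat
  | 4%nat => -1 * r 1%nat + 1 * r 4%nat + 1 * r 5%nat
  | 5%nat => -1 * r 3%nat + 1 * r 4%nat + 1 * r 6%nat
  | 6%nat => -1 * r 2%nat + 1 * r 5%nat + 1 * r 6%nat
  | _ => 0
  end.

Definition tp (a b c sg : R) (f : nat -> R -> R) (e : nat) (t : R) : R :=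
  let A := Acomb a b c sg f in
  match e with
  | 0%nat => pw (A 2%nat 0%nat) (fun t => sg * A 2%nat 1%nat (2*b - t)) b t
  | 1%nat => pw (A 1%nat 0%nat) (fun t => sg * A 1%nat 2%nat (2*a - t)) a t
  | 2%nat => pw (A 3%nat 0%nat) (fun t => sg * A 3%nat 3%nat (2*c - t)) c t
  | 3%nat => pw (A 3%nat 1%nat) (fun t => sg * A 3%nat 4%nat (2*c - t)) c t
  | 4%nat => pw (A 2%nat 2%nat) (fun t => sg * A 2%nat 5%nat (2*b - t)) b t
  | 5%nat => pw (A 1%nat 3%nat) (fun t => sg * A 1%nat 6%nat (2*a - t)) a t
  | 6%nat => A 1%nat 1%nat t
  | 7%nat => A 3%nat 2%nat t
  | 8%nat => A 2%nat 3%nat t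
  | 9%nat => A 1%nat 4%nat t
  | 10%nat => A 2%nat 4%nat t
  | 11%nat => A 1%nat 5%nat t
  | 12%nat => A 3%nat 5%nat t
  | 13%nat => A 3%nat 6%nat t
  | 14%nat => A 2%nat 6%nat t
  | _ => 0
  end.

Section D.
Variables (a b c sg sg' : R) (f f' : nat -> R -> R).
Hypothesis Hs : sg' = - sg.
Hypothesis Hf : forall e y, derivable_pt_lim (f e) y (f' e y).

Lemma arm_deriv x p s : derivable_pt_lim (arm a b c sg f x p) s (arm a b c sg' f' x p s).
Proof.
  unfold arm.
  destruct x as [|[|[|[|x]]]]; try apply derivable_pt_lim_const;
  (destruct p as [|[|[|[|[|[|[|p]]]]]]]; try apply derivable_pt_lim_const; try apply Hf;
   apply refl_deriv; auto).
Qed.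

Lemma A_deriv x q s : derivable_pt_lim (Acomb a b c sg f x q) s (Acomb a b c sg' f' x q s).
Proof.
  unfold Acomb.
  destruct q as [|[|[|[|[|[|[|q]]]]]]]; try apply derivable_pt_lim_const;
  apply lin3_deriv; apply arm_deriv.
Qed.

Definition Mid (sg : R) (f : nat -> R -> R) : Prop :=
  Acomb a b c sg f 2 0 b = sg * Acomb a b c sg f 2 1 (2*b - b) /\
  Acomb a b c sg f 1 0 a = sg * Acomb a b c sg f 1 2 (2*a - a) /\
  Acomb a b c sg f 3 0 c = sg * Acomb a b c sg f 3 3 (2*c - c) /\
  Acomb a b c sg f 3 1 c = sg * Acomb a b c sg f 3 4 (2*c - c) /\
  Acomb a b c sg f 2 2 b = sg * Acomb a b c sg f 2 5 (2*b - b) /\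
  Acomb a b c sg f 1 3 a = sg * Acomb a b c sg f 1 6 (2*a - a).

Lemma tp_deriv : Mid sg f -> Mid sg' f' ->
  forall e t, derivable_pt_lim (tp a b c sg f e) t (tp a b c sg' f' e t).
Proof.
  intros M M' e t. unfold tp.
  destruct M as (M0 & M1 & M2 & M3 & M4 & M5).
  destruct M' as (N0 & N1 & N2 & N3 & N4 & N5).
  destruct e as [|[|[|[|[|[|[|[|[|[|[|[|[|[|[|e]]]]]]]]]]]]]]];
  try apply derivable_pt_lim_const; try apply A_deriv;
  (apply pw_deriv; [apply A_deriv | apply reflf_deriv; [auto | apply A_deriv] | auto | auto]).
Qed.
End D.

Lemma two_sub x : 2 * x - x = x. Proof. ring. Qed.
Lemma two_sub2 x y : 2 * x - (2 * x - y) = y. Proof. ring. Qed.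

Ltac pwr := repeat first [rewrite pw_le by lra | rewrite pw_gt by lra].
Ltac nrm := repeat first [rewrite Rminus_0_r | rewrite two_sub | rewrite Rminus_diag | rewrite two_sub2].
Ltac unf := unfold Acomb, arm; cbv beta; nrm.

Section T.
Variables (a b c lam : R) (p dp ddp : nat -> R -> R).
Hypotheses (Ha : 0 < a) (Hb : 0 < b) (Hc : 0 < c).

Lemma Mid0 : Eqs a b c p dp -> Mid a b c 1 p.
Proof. unfold Eqs, Mid; intros H; decompose [and] H; nrm; unf; lra. Qed.
Lemma Mid1 : Mid a b c (-1) dp.
Proof. unfold Mid; nrm; unf; lra. Qed.
Lemma Mid2 : Eqs a b c p dp ->
  ddp 6%nat a = 0 -> ddp 7%nat b = 0 -> ddp 8%nat c = 0 -> ddp 9%nat a = 0 -> ddp 10%nat c = 0 ->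
  ddp 11%nat a = 0 -> ddp 12%nat b = 0 -> ddp 13%nat b = 0 -> ddp 14%nat c = 0 ->
  Mid a b c 1 ddp.
Proof. unfold Mid; intros; nrm; unf; lra. Qed.

Lemma tp_Eqs : Eqs a b c p dp -> Eqs a c b (tp a b c 1 p) (tp a b c (-1) dp).
Proof.
  intros H. unfold Eqs in H; decompose [and] H; clear H.
  unfold Eqs, tp. pwr. nrm. unf. repeat split; lra.
Qed.
End T.

Definition Lx (a b c : R) (x : nat) : R := match x with 1%nat => a | 2%nat => b | _ => c end.

Section O.
Variables (a b c lam : R) (p ddp : nat -> R -> R).
Hypotheses (Ha : 0 < a) (Hb : 0 < b) (Hc : 0 < c).
Hypothesis H : forall e x, (e < nE (G1 a b c))%nat -> 0 <= x <= len (G1 a b c) e -> - ddp e x = lam * p e x.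

Lemma arm_ode x q s : (1 <= x <= 3)%nat -> 0 <= s <= Lx a b c x ->
  - arm a b c 1 ddp x q s = lam * arm a b c 1 p x q s.
Proof.
  intros Hx Hs.
  destruct x as [|[|[|[|x]]]]; try lia; unfold Lx in Hs;
  (destruct q as [|[|[|[|[|[|[|q]]]]]]]; unfold arm; cbv beta;
   [ match goal with |- context[ddp ?e ?y] =>
       let Hy := fresh in assert (Hy := H e y ltac:(cbn; lia) ltac:(unfold len; cbn; lra)); lra end .. | lra ]).
Qed.

Lemma A_ode x q s : (1 <= x <= 3)%nat -> 0 <= s <= Lx a b c x ->
  - Acomb a b c 1 ddp x q s = lam * Acomb a b c 1 p x q s.
Proof.
  intros Hx Hs.
  pose proof (arm_ode x 0 s Hx Hs). pose proof (arm_ode x 1 s Hx Hs).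
  pose proof (arm_ode x 2 s Hx Hs). pose proof (arm_ode x 3 s Hx Hs).
  pose proof (arm_ode x 4 s Hx Hs). pose proof (arm_ode x 5 s Hx Hs).
  pose proof (arm_ode x 6 s Hx Hs).
  unfold Acomb; cbv beta.
  destruct q as [|[|[|[|[|[|[|q]]]]]]]; lra.
Qed.

Lemma tp_ode e t : (e < nE (G2 a b c))%nat -> 0 <= t <= len (G2 a b c) e ->
  - tp a b c 1 ddp e t = lam * tp a b c 1 p e t.
Proof.
  intros He Ht. cbn in He. unfold len in Ht.
  destruct e as [|[|[|[|[|[|[|[|[|[|[|[|[|[|[|e]]]]]]]]]]]]]]]; try lia; cbn in Ht; unfold tp;
  try (apply A_ode; [lia| unfold Lx; lra]);
  (match goal with |- context[pw _ _ ?m t] =>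
    destruct (Rle_dec t m); [rewrite !pw_le by lra | rewrite !pw_gt by lra] end;
   [apply A_ode; [lia| unfold Lx; lra] |
    match goal with |- context[Acomb _ _ _ _ _ ?x ?q ?s] =>
      pose proof (A_ode x q s ltac:(lia) ltac:(unfold Lx; lra)); lra end]).
Qed.
End O.

Lemma tp_eig (a b c lam : R) p dp ddp : 0 < a -> 0 < b -> 0 < c ->
  eig_solution (G1 a b c) lam p dp ddp ->
  eig_solution (G2 a b c) lam (tp a b c 1 p) (tp a b c (-1) dp) (tp a b c 1 ddp).
Proof.
  intros Ha Hb Hc [[D1 D2] [Ho Hv]].
  apply DSBC_G1_to in Hv.
  assert (Hend : forall e x, (e < 15)%nat -> x = len (G1 a b c) e -> p e x = 0 -> ddp e x = 0).
  { intros e x He Hx Hp.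
    assert (Hl : 0 <= x <= len (G1 a b c) e).
    { rewrite Hx; split; [|lra].
      destruct e as [|[|[|[|[|[|[|[|[|[|[|[|[|[|[|e]]]]]]]]]]]]]]]; try lia; unfold len; cbn; lra. }
    assert (Hh := Ho e x He Hl). rewrite Hp in Hh; lra. }
  assert (M0 := Mid0 a b c p dp Hv).
  assert (M1 := Mid1 a b c dp).
  assert (M2 : Mid a b c 1 ddp).
  { pose proof Hv as Hv'. unfold Eqs in Hv'. decompose [and] Hv'.
    apply (Mid2 a b c p dp ddp); auto; apply Hend; auto; lia. }
  split; [split|split].
  - apply tp_deriv; auto; ring.
  - apply tp_deriv; auto; ring.
  - intros e x He Hx. apply (tp_ode a b c lam p ddp); auto.
  - change (DSBC_vertex (G1 a c b) (tp a b c 1 p) (tp a b c (-1) dp)).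
    apply DSBC_G1_from. apply tp_Eqs; auto.
Qed.

Ltac solve_tpA :=
  unfold tp; cbv beta iota zeta;
  first [ reflexivity
        | match goal with |- pw _ _ ?m ?t = _ =>
            destruct (Rle_dec t m) as [Hle|Hgt];
            [rewrite pw_le by lra | rewrite pw_gt by lra] end;
          first [ reflexivity | lra | (rewrite two_sub2; ring)
                | (match goal with Hs : 0 <= ?s <= ?m |- _ => assert (s = m) by lra; subst s end;
                   match goal with MM : Mid _ _ _ _ _ |- _ => destruct MM as (M0 & M1 & M2 & M3 & M4 & M5) end; rewrite ?two_sub in *; lra) ] ].

Lemma tp_A (a b c : R) x q s : 0 < a -> 0 < b -> 0 < c ->
  (1 <= x <= 3)%nat -> (q < 7)%nat -> 0 <= s <= Lx a b c x ->
  exists e t, (e < 15)%nat /\ 0 <= t <= len (G2 a b c) e /\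
    forall f, Mid a b c 1 f -> tp a b c 1 f e t = Acomb a b c 1 f x q s.
Proof.
  intros Ha Hb Hc Hx Hq Hs.
  destruct x as [|[|[|[|x]]]]; try lia; unfold Lx in Hs;
  (destruct q as [|[|[|[|[|[|[|q]]]]]]]; try lia).
  - exists 1%nat, (s); split; [lia|]; split; [unfold len; cbn; lra|]. intros f M; solve_tpA.
  - exists 6%nat, (s); split; [lia|]; split; [unfold len; cbn; lra|]. intros f M; solve_tpA.
  - exists 1%nat, (2*a - s); split; [lia|]; split; [unfold len; cbn; lra|]. intros f M; solve_tpA.
  - exists 5%nat, (s); split; [lia|]; split; [unfold len; cbn; lra|]. intros f M; solve_tpA.
  - exists 9%nat, (s); split; [lia|]; split; [unfold len; cbn; lra|]. intros f M; solve_tpA.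
  - exists 11%nat, (s); split; [lia|]; split; [unfold len; cbn; lra|]. intros f M; solve_tpA.
  - exists 5%nat, (2*a - s); split; [lia|]; split; [unfold len; cbn; lra|]. intros f M; solve_tpA.
  - exists 0%nat, (s); split; [lia|]; split; [unfold len; cbn; lra|]. intros f M; solve_tpA.
  - exists 0%nat, (2*b - s); split; [lia|]; split; [unfold len; cbn; lra|]. intros f M; solve_tpA.
  - exists 4%nat, (s); split; [lia|]; split; [unfold len; cbn; lra|]. intros f M; solve_tpA.
  - exists 8%nat, (s); split; [lia|]; split; [unfold len; cbn; lra|]. intros f M; solve_tpA.
  - exists 10%nat, (s); split; [lia|]; split; [unfold len; cbn; lra|]. intros f M; solve_tpA.
  - exists 4%nat, (2*b - s); split; [lia|]; split; [unfold len; cbn; lra|]. intros f M; solve_tpA.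
  - exists 14%nat, (s); split; [lia|]; split; [unfold len; cbn; lra|]. intros f M; solve_tpA.
  - exists 2%nat, (s); split; [lia|]; split; [unfold len; cbn; lra|]. intros f M; solve_tpA.
  - exists 3%nat, (s); split; [lia|]; split; [unfold len; cbn; lra|]. intros f M; solve_tpA.
  - exists 7%nat, (s); split; [lia|]; split; [unfold len; cbn; lra|]. intros f M; solve_tpA.
  - exists 2%nat, (2*c - s); split; [lia|]; split; [unfold len; cbn; lra|]. intros f M; solve_tpA.
  - exists 3%nat, (2*c - s); split; [lia|]; split; [unfold len; cbn; lra|]. intros f M; solve_tpA.
  - exists 12%nat, (s); split; [lia|]; split; [unfold len; cbn; lra|]. intros f M; solve_tpA.
  - exists 13%nat, (s); split; [lia|]; split; [unfold len; cbn; lra|]. intros f M; solve_tpA.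
Qed.

Lemma arm_cover (a b c : R) e y : 0 < a -> 0 < b -> 0 < c -> (e < 15)%nat ->
  0 <= y <= len (G1 a b c) e ->
  exists x q s, (1 <= x <= 3)%nat /\ (q < 7)%nat /\ 0 <= s <= Lx a b c x /\
    forall f : nat -> R -> R, f e y = arm a b c 1 f x q s.
Proof.
  intros Ha Hb Hc He Hy.
  destruct e as [|[|[|[|[|[|[|[|[|[|[|[|[|[|[|e]]]]]]]]]]]]]]]; try lia; unfold len in Hy; cbn in Hy.
  - destruct (Rle_dec y c).
    + exists 3%nat, 0%nat, y; split; [lia|]; split; [lia|]; split; [unfold Lx; lra|]. intros f; reflexivity.
    + exists 3%nat, 1%nat, (2*c - y); split; [lia|]; split; [lia|]; split; [unfold Lx; lra|]. intros f; unfold arm; rewrite two_sub2; ring.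
  - destruct (Rle_dec y a).
    + exists 1%nat, 0%nat, y; split; [lia|]; split; [lia|]; split; [unfold Lx; lra|]. intros f; reflexivity.
    + exists 1%nat, 2%nat, (2*a - y); split; [lia|]; split; [lia|]; split; [unfold Lx; lra|]. intros f; unfold arm; rewrite two_sub2; ring.
  - destruct (Rle_dec y b).
    + exists 2%nat, 0%nat, y; split; [lia|]; split; [lia|]; split; [unfold Lx; lra|]. intros f; reflexivity.
    + exists 2%nat, 3%nat, (2*b - y); split; [lia|]; split; [lia|]; split; [unfold Lx; lra|]. intros f; unfold arm; rewrite two_sub2; ring.
  - destruct (Rle_dec y b).
    + exists 2%nat, 1%nat, y; split; [lia|]; split; [lia|]; split; [unfold Lx; lra|]. intros f; reflexivity.
    + exists 2%nat, 4%nat, (2*b - y); split; [lia|]; split; [lia|]; split; [unfold Lx; lra|]. intros f; unfold arm; rewrite two_sub2; ring.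
  - destruct (Rle_dec y c).
    + exists 3%nat, 2%nat, y; split; [lia|]; split; [lia|]; split; [unfold Lx; lra|]. intros f; reflexivity.
    + exists 3%nat, 5%nat, (2*c - y); split; [lia|]; split; [lia|]; split; [unfold Lx; lra|]. intros f; unfold arm; rewrite two_sub2; ring.
  - destruct (Rle_dec y a).
    + exists 1%nat, 3%nat, y; split; [lia|]; split; [lia|]; split; [unfold Lx; lra|]. intros f; reflexivity.
    + exists 1%nat, 6%nat, (2*a - y); split; [lia|]; split; [lia|]; split; [unfold Lx; lra|]. intros f; unfold arm; rewrite two_sub2; ring.
  - exists 1%nat, 1%nat, y; split; [lia|]; split; [lia|]; split; [unfold Lx; lra|]. intros f; reflexivity.
  - exists 2%nat, 2%nat, y; split; [lia|]; split; [lia|]; split; [unfold Lx; lra|]. intros f; reflexivity.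
  - exists 3%nat, 3%nat, y; split; [lia|]; split; [lia|]; split; [unfold Lx; lra|]. intros f; reflexivity.
  - exists 1%nat, 4%nat, y; split; [lia|]; split; [lia|]; split; [unfold Lx; lra|]. intros f; reflexivity.
  - exists 3%nat, 4%nat, y; split; [lia|]; split; [lia|]; split; [unfold Lx; lra|]. intros f; reflexivity.
  - exists 1%nat, 5%nat, y; split; [lia|]; split; [lia|]; split; [unfold Lx; lra|]. intros f; reflexivity.
  - exists 2%nat, 5%nat, y; split; [lia|]; split; [lia|]; split; [unfold Lx; lra|]. intros f; reflexivity.
  - exists 2%nat, 6%nat, y; split; [lia|]; split; [lia|]; split; [unfold Lx; lra|]. intros f; reflexivity.
  - exists 3%nat, 6%nat, y; split; [lia|]; split; [lia|]; split; [unfold Lx; lra|]. intros f; reflexivity.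
Qed.

Lemma rsum_ext n (f g : nat -> R) : (forall i, (i < n)%nat -> f i = g i) -> rsum n f = rsum n g.
Proof.
  induction n; intros H; cbn; auto.
  rewrite IHn by (intros; apply H; lia). rewrite H by lia. reflexivity.
Qed.

Definition AcombV (r : nat -> R) (q : nat) : R :=
  match q with
  | 0%nat => -1 * r 1%nat + -1 * r 2%nat + -1 * r 3%nat
  | 1%nat => -1 * r 0%nat + 1 * r 2%nat + -1 * r 4%nat
  | 2%nat => -1 * r 0%nat + 1 * r 1%nat + -1 * r 6%nat
  | 3%nat => -1 * r 0%nat + 1 * r 3%nat + -1 * r 5%nat
  | 4%nat => -1 * r 1%nat + 1 * r 4%nat + 1 * r 5%nat
  | 5%nat => -1 * r 3%nat + 1 * r 4%nat + 1 * r 6%nat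
  | 6%nat => -1 * r 2%nat + 1 * r 5%nat + 1 * r 6%nat
  | _ => 0
  end.

Lemma Acomb_V a b c sg f x q s : Acomb a b c sg f x q s = AcombV (fun p => arm a b c sg f x p s) q.
Proof. destruct q as [|[|[|[|[|[|[|q]]]]]]]; reflexivity. Qed.

Lemma rsum_AcombV n (cc : nat -> R) (r : nat -> nat -> R) q :
  rsum n (fun i => cc i * AcombV (r i) q) = AcombV (fun p => rsum n (fun i => cc i * r i p)) q.
Proof.
  destruct q as [|[|[|[|[|[|[|q]]]]]]]; cbn; induction n; cbn; try ring; rewrite IHn; ring.
Qed.

Lemma mult_transfer a b c lam n : 0 < a -> 0 < b -> 0 < c ->
  mult_ge (G1 a b c) lam n -> mult_ge (G2 a b c) lam n.
Proof.
  intros Ha Hb Hc [Phi [dPhi [ddPhi [Heig Hind]]]].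
  exists (fun i => tp a b c 1 (Phi i)), (fun i => tp a b c (-1) (dPhi i)), (fun i => tp a b c 1 (ddPhi i)).
  split.
  - intros i Hi. apply tp_eig; auto.
  - intros cc Hcc. apply (Hind cc).
    assert (HM : forall i, (i < n)%nat -> Mid a b c 1 (Phi i)).
    { intros i Hi. destruct (Heig i Hi) as [_ [_ Hv]]. apply (Mid0 a b c (Phi i) (dPhi i)).
      apply DSBC_G1_to; auto. }
    set (Phi_ := fun x p s => rsum n (fun i => cc i * arm a b c 1 (Phi i) x p s)).
    assert (S1 : forall x q s, (1 <= x <= 3)%nat -> (q < 7)%nat -> 0 <= s <= Lx a b c x ->
               AcombV (fun p => Phi_ x p s) q = 0).
    { intros x q s Hx Hq Hs.
      destruct (tp_A a b c x q s Ha Hb Hc Hx Hq Hs) as [e [t [He [Ht HA]]]].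
      specialize (Hcc e t He Ht). cbv beta in Hcc.
      unfold Phi_. rewrite <- rsum_AcombV. rewrite <- Hcc.
      apply rsum_ext. intros i Hi. rewrite HA by (apply HM; auto). rewrite Acomb_V. reflexivity. }
    assert (S2 : forall x p s, (1 <= x <= 3)%nat -> (p < 7)%nat -> 0 <= s <= Lx a b c x -> Phi_ x p s = 0).
    { intros x p s Hx Hp Hs.
      pose proof (S1 x 0%nat s Hx ltac:(lia) Hs). pose proof (S1 x 1%nat s Hx ltac:(lia) Hs).
      pose proof (S1 x 2%nat s Hx ltac:(lia) Hs). pose proof (S1 x 3%nat s Hx ltac:(lia) Hs).
      pose proof (S1 x 4%nat s Hx ltac:(lia) Hs). pose proof (S1 x 5%nat s Hx ltac:(lia) Hs).
      pose proof (S1 x 6%nat s Hx ltac:(lia) Hs).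
      unfold AcombV in *.
      destruct p as [|[|[|[|[|[|[|p]]]]]]]; try lia; lra. }
    intros e y He Hy.
    destruct (arm_cover a b c e y Ha Hb Hc He Hy) as [x [q [s [Hx [Hq [Hs Hf]]]]]].
    rewrite <- (S2 x q s Hx Hq Hs). unfold Phi_. apply rsum_ext. intros i Hi. rewrite Hf. reflexivity.
Qed.

Lemma iso_part a b c : 0 < a -> 0 < b -> 0 < c -> isospectral (G1 a b c) (G2 a b c).
Proof.
  intros Ha Hb Hc lam n. split.
  - apply mult_transfer; auto.
  - intros H. change (mult_ge (G2 a c b) lam n). apply mult_transfer; auto.
Qed.

Ltac e15 e := do 15 (destruct e as [|e]; [unfold src, tgt in *; cbn in *; lia|]); lia.

Lemma L1 a b c e w : (e < 15)%nat -> (7 <= w)%nat ->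
  src (G2 a b c) e = w \/ tgt (G2 a b c) e = w -> e = (w - 1)%nat.
Proof. intros He Hw H. e15 e. Qed.

Lemma L2 a b c e : (e < 15)%nat -> (src (G2 a b c) e <= 6)%nat -> (tgt (G2 a b c) e <= 6)%nat -> (e <= 5)%nat.
Proof. intros He H1 H2. e15 e. Qed.

Lemma L3 a b c e w : (e <= 5)%nat -> w <> 0%nat ->
  src (G2 a b c) e = w \/ tgt (G2 a b c) e = w -> e = (w - 1)%nat \/ e = (w + 2)%nat.
Proof. intros He Hw H. do 6 (destruct e as [|e]; [unfold src, tgt in *; cbn in *; lia|]); lia. Qed.

Lemma noniso a b c : 0 < a -> 0 < b -> 0 < c -> a <> b -> b <> c -> a <> c ->
  ~ isometric (G1 a b c) (G2 a b c).
Proof.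
  intros Ha Hb Hc Hab Hbc Hac [HnV [HnE [fV [fE [HfV [HfVi [HfE [HfEi Hmap]]]]]]]].
  cbn in HfV, HfVi, HfE, HfEi, Hmap.
  assert (Hi : forall e, (e < 15)%nat -> forall v, (v = src (G1 a b c) e \/ v = tgt (G1 a b c) e) ->
      src (G2 a b c) (fE e) = fV v \/ tgt (G2 a b c) (fE e) = fV v).
  { intros e He v Hv. destruct (Hmap e He) as [_ [[H1 H2]|[H1 H2]]]; destruct Hv; subst v; tauto. }
  assert (Int : forall v e1 e2 e3, (e1 < 15)%nat -> (e2 < 15)%nat -> (e3 < 15)%nat ->
     e1 <> e2 -> e1 <> e3 -> e2 <> e3 ->
     (v = src (G1 a b c) e1 \/ v = tgt (G1 a b c) e1) ->
     (v = src (G1 a b c) e2 \/ v = tgt (G1 a b c) e2) ->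
     (v = src (G1 a b c) e3 \/ v = tgt (G1 a b c) e3) -> (fV v <= 6)%nat).
  { intros v e1 e2 e3 H1 H2 H3 D12 D13 D23 I1 I2 I3.
    destruct (le_lt_dec (fV v) 6) as [|Hlt]; auto. exfalso.
    pose proof (L1 a b c (fE e1) (fV v) (HfE e1 H1) Hlt (Hi e1 H1 v I1)).
    pose proof (L1 a b c (fE e2) (fV v) (HfE e2 H2) Hlt (Hi e2 H2 v I2)).
    apply D12, HfEi; auto; lia. }
  assert (V0 : (fV 0 <= 6)%nat) by (apply (Int 0%nat 0%nat 1%nat 2%nat); cbn; lia).
  assert (V1 : (fV 1 <= 6)%nat) by (apply (Int 1%nat 0%nat 3%nat 6%nat); unfold src, tgt; cbn; lia).
  assert (V2 : (fV 2 <= 6)%nat) by (apply (Int 2%nat 1%nat 4%nat 7%nat); unfold src, tgt; cbn; lia).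
  assert (V3 : (fV 3 <= 6)%nat) by (apply (Int 3%nat 2%nat 5%nat 8%nat); unfold src, tgt; cbn; lia).
  assert (Hsh : forall e, (e < 3)%nat -> (fE e <= 5)%nat /\
            (src (G2 a b c) (fE e) = fV 0%nat \/ tgt (G2 a b c) (fE e) = fV 0%nat)).
  { intros e He. split.
    - destruct (Hmap e ltac:(lia)) as [_ [[H1 H2]|[H1 H2]]];
      (apply (L2 a b c); [apply HfE; lia | rewrite H1 | rewrite H2]);
      destruct e as [|[|[|e]]]; unfold src, tgt; cbn; lia.
    - apply Hi; [lia|]. destruct e as [|[|[|e]]]; unfold src, tgt; cbn; lia. }
  assert (F0 : fV 0%nat = 0%nat).
  { destruct (Nat.eq_dec (fV 0%nat) 0) as [|Hn]; auto. exfalso.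
    destruct (Hsh 0%nat ltac:(lia)) as [A0 B0]. destruct (Hsh 1%nat ltac:(lia)) as [A1 B1].
    destruct (Hsh 2%nat ltac:(lia)) as [A2 B2].
    pose proof (L3 a b c _ _ A0 Hn B0). pose proof (L3 a b c _ _ A1 Hn B1). pose proof (L3 a b c _ _ A2 Hn B2).
    assert (fE 0%nat <> fE 1%nat) by (intro E; assert (0 = 1)%nat by (apply HfEi; auto; lia); lia).
    assert (fE 0%nat <> fE 2%nat) by (intro E; assert (0 = 2)%nat by (apply HfEi; auto; lia); lia).
    assert (fE 1%nat <> fE 2%nat) by (intro E; assert (1 = 2)%nat by (apply HfEi; auto; lia); lia).
    lia. }
  assert (I01 : fV 0%nat <> fV 1%nat) by (intro E; assert (0 = 1)%nat by (apply HfVi; auto; lia); lia).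
  destruct (Hmap 0%nat ltac:(lia)) as [Len0 End0].
  assert (K0 := HfE 0%nat ltac:(lia)).
  unfold len, src, tgt in Len0, End0; cbn in Len0, End0.
  assert (E0 : fE 0%nat = 2%nat /\ fV 1%nat = 3%nat).
  { remember (fE 0%nat) as k. rewrite F0 in *.
    do 15 (destruct k as [|k]; [cbn in Len0, End0;
       first [ lia | (exfalso; apply Hbc; lra) | (exfalso; apply Hac; lra) | (exfalso; apply Hab; lra) | idtac ] |]).
    all: lia. }
  destruct E0 as [E0 F1].
  destruct (Hmap 6%nat ltac:(lia)) as [Len6 End6].
  assert (K6 := HfE 6%nat ltac:(lia)).
  assert (N6 : fE 6%nat <> 2%nat) by (intro E; assert (6 = 0)%nat by (apply HfEi; auto; lia); lia).
  unfold len, src, tgt in Len6, End6; cbn in Len6, End6. rewrite F1 in End6.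
  remember (fE 6%nat) as k.
  do 15 (destruct k as [|k]; [cbn in Len6, End6;
       first [ lia | (exfalso; apply Hbc; lra) | (exfalso; apply Hac; lra) | (exfalso; apply Hab; lra) | lra ] |]).
  lia.
Qed.

Definition PA (a b c : R) : R := 64 * b^3 * c^5 + 144 * b^4 * c^4 + 64 * b^5 * c^3 + 192 * a * b^2 * c^5 + 704 * a * b^3 * c^4 + 704 * a * b^4 * c^3 + 192 * a * b^5 * c^2 + 192 * a^2 * b * c^5 + 1120 * a^2 * b^2 * c^4 + 1870 * a^2 * b^3 * c^3 + 1120 * a^2 * b^4 * c^2 + 192 * a^2 * b^5 * c + 64 * a^3 * c^5 + 704 * a^3 * b * c^4 + 1870 * a^3 * b^2 * c^3 + 1870 * a^3 * b^3 * c^2 + 704 * a^3 * b^4 * c + 64 * a^3 * b^5 + 144 * a^4 * c^4 + 704 * a^4 * b * c^3 + 1120 * a^4 * b^2 * c^2 + 704 * a^4 * b^3 * c + 144 * a^4 * b^4 + 64 * a^5 * c^3 + 192 * a^5 * b * c^2 + 192 * a^5 * b^2 * c + 64 * a^5 * b^3.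
Definition N0 (a b c : R) : R := 112 * b^4 * c^6 + 224 * b^5 * c^5 + 96 * b^6 * c^4 + 432 * a * b^3 * c^6 + 1472 * a * b^4 * c^5 + 1436 * a * b^5 * c^4 + 400 * a * b^6 * c^3 + 624 * a^2 * b^2 * c^6 + 3254 * a^2 * b^3 * c^5 + 5208 * a^2 * b^4 * c^4 + 3218 * a^2 * b^5 * c^3 + 624 * a^2 * b^6 * c^2 + 400 * a^3 * b * c^6 + 3218 * a^3 * b^2 * c^5 + 7711 * a^3 * b^3 * c^4 + 7711 * a^3 * b^4 * c^3 + 3254 * a^3 * b^5 * c^2 + 432 * a^3 * b^6 * c + 96 * a^4 * c^6 + 1436 * a^4 * b * c^5 + 5208 * a^4 * b^2 * c^4 + 7711 * a^4 * b^3 * c^3 + 5208 * a^4 * b^4 * c^2 + 1472 * a^4 * b^5 * c + 112 * a^4 * b^6 + 224 * a^5 * c^5 + 1472 * a^5 * b * c^4 + 3254 * a^5 * b^2 * c^3 + 3218 * a^5 * b^3 * c^2 + 1436 * a^5 * b^4 * c + 224 * a^5 * b^5 + 112 * a^6 * c^4 + 432 * a^6 * b * c^3 + 624 * a^6 * b^2 * c^2 + 400 * a^6 * b^3 * c + 96 * a^6 * b^4.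
Definition N1 (a b c : R) : R := 64 * a * b^3 * c^6 + 264 * a * b^4 * c^5 + 320 * a * b^5 * c^4 + 112 * a * b^6 * c^3 + 176 * a^2 * b^2 * c^6 + 1048 * a^2 * b^3 * c^5 + 2012 * a^2 * b^4 * c^4 + 1462 * a^2 * b^5 * c^3 + 336 * a^2 * b^6 * c^2 + 160 * a^3 * b * c^6 + 1412 * a^3 * b^2 * c^5 + 3971 * a^3 * b^3 * c^4 + 4549 * a^3 * b^4 * c^3 + 2182 * a^3 * b^5 * c^2 + 336 * a^3 * b^6 * c + 48 * a^4 * c^6 + 756 * a^4 * b * c^5 + 3188 * a^4 * b^2 * c^4 + 5325 * a^4 * b^3 * c^3 + 3992 * a^4 * b^4 * c^2 + 1264 * a^4 * b^5 * c + 112 * a^4 * b^6 + 128 * a^5 * c^5 + 992 * a^5 * b * c^4 + 2450 * a^5 * b^2 * c^3 + 2654 * a^5 * b^3 * c^2 + 1292 * a^5 * b^4 * c + 224 * a^5 * b^5 + 80 * a^6 * c^4 + 336 * a^6 * b * c^3 + 528 * a^6 * b^2 * c^2 + 368 * a^6 * b^3 * c + 96 * a^6 * b^4.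
Definition N2 (a b c : R) : R := 112 * b^4 * c^6 + 224 * b^5 * c^5 + 96 * b^6 * c^4 + 336 * a * b^3 * c^6 + 1264 * a * b^4 * c^5 + 1292 * a * b^5 * c^4 + 368 * a * b^6 * c^3 + 336 * a^2 * b^2 * c^6 + 2182 * a^2 * b^3 * c^5 + 3992 * a^2 * b^4 * c^4 + 2654 * a^2 * b^5 * c^3 + 528 * a^2 * b^6 * c^2 + 112 * a^3 * b * c^6 + 1462 * a^3 * b^2 * c^5 + 4549 * a^3 * b^3 * c^4 + 5325 * a^3 * b^4 * c^3 + 2450 * a^3 * b^5 * c^2 + 336 * a^3 * b^6 * c + 320 * a^4 * b * c^5 + 2012 * a^4 * b^2 * c^4 + 3971 * a^4 * b^3 * c^3 + 3188 * a^4 * b^4 * c^2 + 992 * a^4 * b^5 * c + 80 * a^4 * b^6 + 264 * a^5 * b * c^4 + 1048 * a^5 * b^2 * c^3 + 1412 * a^5 * b^3 * c^2 + 756 * a^5 * b^4 * c + 128 * a^5 * b^5 + 64 * a^6 * b * c^3 + 176 * a^6 * b^2 * c^2 + 160 * a^6 * b^3 * c + 48 * a^6 * b^4.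
Definition N3 (a b c : R) : R := 80 * b^4 * c^6 + 128 * b^5 * c^5 + 48 * b^6 * c^4 + 336 * a * b^3 * c^6 + 992 * a * b^4 * c^5 + 756 * a * b^5 * c^4 + 160 * a * b^6 * c^3 + 528 * a^2 * b^2 * c^6 + 2450 * a^2 * b^3 * c^5 + 3188 * a^2 * b^4 * c^4 + 1412 * a^2 * b^5 * c^3 + 176 * a^2 * b^6 * c^2 + 368 * a^3 * b * c^6 + 2654 * a^3 * b^2 * c^5 + 5325 * a^3 * b^3 * c^4 + 3971 * a^3 * b^4 * c^3 + 1048 * a^3 * b^5 * c^2 + 64 * a^3 * b^6 * c + 96 * a^4 * c^6 + 1292 * a^4 * b * c^5 + 3992 * a^4 * b^2 * c^4 + 4549 * a^4 * b^3 * c^3 + 2012 * a^4 * b^4 * c^2 + 264 * a^4 * b^5 * c + 224 * a^5 * c^5 + 1264 * a^5 * b * c^4 + 2182 * a^5 * b^2 * c^3 + 1462 * a^5 * b^3 * c^2 + 320 * a^5 * b^4 * c + 112 * a^6 * c^4 + 336 * a^6 * b * c^3 + 336 * a^6 * b^2 * c^2 + 112 * a^6 * b^3 * c.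
Definition N4 (a b c : R) : R := 32 * a * b^3 * c^6 + 136 * a * b^4 * c^5 + 176 * a * b^5 * c^4 + 64 * a * b^6 * c^3 + 112 * a^2 * b^2 * c^6 + 608 * a^2 * b^3 * c^5 + 1064 * a^2 * b^4 * c^4 + 680 * a^2 * b^5 * c^3 + 128 * a^2 * b^6 * c^2 + 128 * a^3 * b * c^6 + 956 * a^3 * b^2 * c^5 + 2273 * a^3 * b^3 * c^4 + 2109 * a^3 * b^4 * c^3 + 736 * a^3 * b^5 * c^2 + 64 * a^3 * b^6 * c + 48 * a^4 * c^6 + 612 * a^4 * b * c^5 + 2092 * a^4 * b^2 * c^4 + 2687 * a^4 * b^3 * c^3 + 1396 * a^4 * b^4 * c^2 + 232 * a^4 * b^5 * c + 128 * a^5 * c^5 + 784 * a^5 * b * c^4 + 1426 * a^5 * b^2 * c^3 + 1018 * a^5 * b^3 * c^2 + 248 * a^5 * b^4 * c + 80 * a^6 * c^4 + 240 * a^6 * b * c^3 + 240 * a^6 * b^2 * c^2 + 80 * a^6 * b^3 * c.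
Definition N5 (a b c : R) : R := 64 * a * b^3 * c^6 + 232 * a * b^4 * c^5 + 248 * a * b^5 * c^4 + 80 * a * b^6 * c^3 + 128 * a^2 * b^2 * c^6 + 736 * a^2 * b^3 * c^5 + 1396 * a^2 * b^4 * c^4 + 1018 * a^2 * b^5 * c^3 + 240 * a^2 * b^6 * c^2 + 64 * a^3 * b * c^6 + 680 * a^3 * b^2 * c^5 + 2109 * a^3 * b^3 * c^4 + 2687 * a^3 * b^4 * c^3 + 1426 * a^3 * b^5 * c^2 + 240 * a^3 * b^6 * c + 176 * a^4 * b * c^5 + 1064 * a^4 * b^2 * c^4 + 2273 * a^4 * b^3 * c^3 + 2092 * a^4 * b^4 * c^2 + 784 * a^4 * b^5 * c + 80 * a^4 * b^6 + 136 * a^5 * b * c^4 + 608 * a^5 * b^2 * c^3 + 956 * a^5 * b^3 * c^2 + 612 * a^5 * b^4 * c + 128 * a^5 * b^5 + 32 * a^6 * b * c^3 + 112 * a^6 * b^2 * c^2 + 128 * a^6 * b^3 * c + 48 * a^6 * b^4.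
Definition N6 (a b c : R) : R := 80 * b^4 * c^6 + 128 * b^5 * c^5 + 48 * b^6 * c^4 + 240 * a * b^3 * c^6 + 784 * a * b^4 * c^5 + 612 * a * b^5 * c^4 + 128 * a * b^6 * c^3 + 240 * a^2 * b^2 * c^6 + 1426 * a^2 * b^3 * c^5 + 2092 * a^2 * b^4 * c^4 + 956 * a^2 * b^5 * c^3 + 112 * a^2 * b^6 * c^2 + 80 * a^3 * b * c^6 + 1018 * a^3 * b^2 * c^5 + 2687 * a^3 * b^3 * c^4 + 2273 * a^3 * b^4 * c^3 + 608 * a^3 * b^5 * c^2 + 32 * a^3 * b^6 * c + 248 * a^4 * b * c^5 + 1396 * a^4 * b^2 * c^4 + 2109 * a^4 * b^3 * c^3 + 1064 * a^4 * b^4 * c^2 + 136 * a^4 * b^5 * c + 232 * a^5 * b * c^4 + 736 * a^5 * b^2 * c^3 + 680 * a^5 * b^3 * c^2 + 176 * a^5 * b^4 * c + 64 * a^6 * b * c^3 + 128 * a^6 * b^2 * c^2 + 64 * a^6 * b^3 * c.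
Definition QQ (a b c : R) : R := 88 * b^3 * c^5 + 184 * b^4 * c^4 + 88 * b^5 * c^3 + 264 * a * b^2 * c^5 + 1016 * a * b^3 * c^4 + 1016 * a * b^4 * c^3 + 264 * a * b^5 * c^2 + 264 * a^2 * b * c^5 + 1664 * a^2 * b^2 * c^4 + 2904 * a^2 * b^3 * c^3 + 1664 * a^2 * b^4 * c^2 + 264 * a^2 * b^5 * c + 88 * a^3 * c^5 + 1016 * a^3 * b * c^4 + 2904 * a^3 * b^2 * c^3 + 2904 * a^3 * b^3 * c^2 + 1016 * a^3 * b^4 * c + 88 * a^3 * b^5 + 184 * a^4 * c^4 + 1016 * a^4 * b * c^3 + 1664 * a^4 * b^2 * c^2 + 1016 * a^4 * b^3 * c + 184 * a^4 * b^4 + 88 * a^5 * c^3 + 264 * a^5 * b * c^2 + 264 * a^5 * b^2 * c + 88 * a^5 * b^3.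

Definition Us (a b c : R) (v : nat) : R :=
  match v with
  | 0%nat => N0 a b c / PA a b c | 1%nat => N1 a b c / PA a b c | 2%nat => N2 a b c / PA a b c
  | 3%nat => N3 a b c / PA a b c | 4%nat => N4 a b c / PA a b c | 5%nat => N5 a b c / PA a b c
  | 6%nat => N6 a b c / PA a b c | _ => 0 end.

Definition alp (a b c : R) (U : nat -> R) (e : nat) : R :=
  match e with
  | 0%nat => (U 1%nat - U 0%nat) / (2*c) + c
  | 1%nat => (U 2%nat - U 0%nat) / (2*a) + a
  | 2%nat => (U 3%nat - U 0%nat) / (2*b) + b
  | 3%nat => (U 4%nat - U 1%nat) / (2*b) + b
  | 4%nat => (U 5%nat - U 2%nat) / (2*c) + c
  | 5%nat => (U 6%nat - U 3%nat) / (2*a) + a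
  | 6%nat => a / 2 - U 1%nat / a
  | 7%nat => b / 2 - U 2%nat / b
  | 8%nat => c / 2 - U 3%nat / c
  | 9%nat => a / 2 - U 4%nat / a
  | 10%nat => c / 2 - U 4%nat / c
  | 11%nat => a / 2 - U 5%nat / a
  | 12%nat => b / 2 - U 5%nat / b
  | 13%nat => b / 2 - U 6%nat / b
  | 14%nat => c / 2 - U 6%nat / c
  | _ => 0 end.

Definition KR (a b c : R) (U : nat -> R) (v : nat) : R :=
  let al := alp a b c U in
  match v with
  | 0%nat => al 0%nat + al 1%nat + al 2%nat
  | 1%nat => - (al 0%nat - 2*c) + al 3%nat + al 6%nat
  | 2%nat => - (al 1%nat - 2*a) + al 4%nat + al 7%nat
  | 3%nat => - (al 2%nat - 2*b) + al 5%nat + al 8%nat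
  | 4%nat => - (al 3%nat - 2*b) + al 9%nat + al 10%nat
  | 5%nat => - (al 4%nat - 2*c) + al 11%nat + al 12%nat
  | 6%nat => - (al 5%nat - 2*a) + al 13%nat + al 14%nat
  | _ => 0 end.

Ltac pos := repeat first [ apply Rplus_lt_0_compat | apply Rmult_lt_0_compat | apply pow_lt | lra ].

Lemma PA_pos a b c : 0 < a -> 0 < b -> 0 < c -> 0 < PA a b c.
Proof. intros; unfold PA; pos. Qed.

Lemma KR_Us a b c v : 0 < a -> 0 < b -> 0 < c -> (v < 7)%nat -> KR a b c (Us a b c) v = 0.
Proof.
  intros Ha Hb Hc Hv. pose proof (PA_pos a b c Ha Hb Hc).
  destruct v as [|[|[|[|[|[|[|v]]]]]]]; try lia; unfold KR, alp, Us;
  unfold N0, N1, N2, N3, N4, N5, N6, PA in *; field; lra.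
Qed.

Lemma sq_div_zero x l : 0 < l -> x * x / l = 0 -> x = 0.
Proof.
  intros Hl H. assert (x * x = 0).
  { replace (x * x) with (x * x / l * l) by (field; lra). rewrite H; ring. }
  nra.
Qed.

Lemma sq_div_nonneg x l : 0 < l -> 0 <= x * x / l.
Proof. intros Hl. apply Rmult_le_pos; [nra | left; apply Rinv_0_lt_compat; auto]. Qed.

Lemma K_uniq a b c U V : 0 < a -> 0 < b -> 0 < c ->
  (forall v, (v < 7)%nat -> KR a b c U v = 0) -> (forall v, (v < 7)%nat -> KR a b c V v = 0) ->
  forall v, (v < 7)%nat -> U v = V v.
Proof.
  intros Ha Hb Hc HU HV.
  set (W := fun v => U v - V v).
  assert (E : (W 0%nat) * (KR a b c U 0%nat - KR a b c V 0%nat) + (W 1%nat) * (KR a b c U 1%nat - KR a b c V 1%nat)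
     + (W 2%nat) * (KR a b c U 2%nat - KR a b c V 2%nat) + (W 3%nat) * (KR a b c U 3%nat - KR a b c V 3%nat)
     + (W 4%nat) * (KR a b c U 4%nat - KR a b c V 4%nat) + (W 5%nat) * (KR a b c U 5%nat - KR a b c V 5%nat)
     + (W 6%nat) * (KR a b c U 6%nat - KR a b c V 6%nat) =
     - ((W 1%nat - W 0%nat) * (W 1%nat - W 0%nat) / (2*c) + (W 2%nat - W 0%nat) * (W 2%nat - W 0%nat) / (2*a)
      + (W 3%nat - W 0%nat) * (W 3%nat - W 0%nat) / (2*b) + (W 4%nat - W 1%nat) * (W 4%nat - W 1%nat) / (2*b)
      + (W 5%nat - W 2%nat) * (W 5%nat - W 2%nat) / (2*c) + (W 6%nat - W 3%nat) * (W 6%nat - W 3%nat) / (2*a)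
      + W 1%nat * W 1%nat / a + W 2%nat * W 2%nat / b + W 3%nat * W 3%nat / c
      + W 4%nat * W 4%nat / a + W 4%nat * W 4%nat / c + W 5%nat * W 5%nat / a + W 5%nat * W 5%nat / b
      + W 6%nat * W 6%nat / b + W 6%nat * W 6%nat / c)).
  { unfold W, KR, alp. field. lra. }
  rewrite !HU, !HV in E by lia.
  assert (P1 := sq_div_nonneg (W 1%nat - W 0%nat) (2*c) ltac:(lra)).
  assert (P2 := sq_div_nonneg (W 2%nat - W 0%nat) (2*a) ltac:(lra)).
  assert (P3 := sq_div_nonneg (W 3%nat - W 0%nat) (2*b) ltac:(lra)).
  assert (P4 := sq_div_nonneg (W 4%nat - W 1%nat) (2*b) ltac:(lra)).
  assert (P5 := sq_div_nonneg (W 5%nat - W 2%nat) (2*c) ltac:(lra)).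
  assert (P6 := sq_div_nonneg (W 6%nat - W 3%nat) (2*a) ltac:(lra)).
  assert (Q1 := sq_div_nonneg (W 1%nat) a Ha). assert (Q2 := sq_div_nonneg (W 2%nat) b Hb).
  assert (Q3 := sq_div_nonneg (W 3%nat) c Hc). assert (Q4 := sq_div_nonneg (W 4%nat) a Ha).
  assert (Q5 := sq_div_nonneg (W 4%nat) c Hc). assert (Q6 := sq_div_nonneg (W 5%nat) a Ha).
  assert (Q7 := sq_div_nonneg (W 5%nat) b Hb). assert (Q8 := sq_div_nonneg (W 6%nat) b Hb).
  assert (Q9 := sq_div_nonneg (W 6%nat) c Hc).
  assert (W1 : W 1%nat = 0) by (apply (sq_div_zero _ a); auto; lra).
  assert (W2 : W 2%nat = 0) by (apply (sq_div_zero _ b); auto; lra).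
  assert (W3 : W 3%nat = 0) by (apply (sq_div_zero _ c); auto; lra).
  assert (W4 : W 4%nat = 0) by (apply (sq_div_zero _ a); auto; lra).
  assert (W5 : W 5%nat = 0) by (apply (sq_div_zero _ a); auto; lra).
  assert (W6 : W 6%nat = 0) by (apply (sq_div_zero _ b); auto; lra).
  assert (W0 : W 1%nat - W 0%nat = 0) by (apply (sq_div_zero _ (2*c)); [lra|lra]).
  intros v Hv.
  destruct v as [|[|[|[|[|[|[|v]]]]]]]; try lia; unfold W in *; lra.
Qed.

(* torsional rigidity in terms of vertex values *)
Definition TTof (a b c : R) (U : nat -> R) : R :=
  ((2*c)^3 + (2*a)^3 + (2*b)^3 + (2*b)^3 + (2*c)^3 + (2*a)^3 + a^3 + b^3 + c^3
   + a^3 + c^3 + a^3 + b^3 + b^3 + c^3) / 12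
  + (a + b + c) * U 0%nat + (c + b + a/2) * U 1%nat + (a + c + b/2) * U 2%nat
  + (b + a + c/2) * U 3%nat + (b + a/2 + c/2) * U 4%nat + (c + a/2 + b/2) * U 5%nat
  + (a + b/2 + c/2) * U 6%nat.

Definition TT (a b c : R) : R := TTof a b c (Us a b c).

Lemma TT_neq a b c : 0 < a -> 0 < b -> 0 < c -> a <> b -> b <> c -> a <> c -> TT a b c <> TT a c b.
Proof.
  intros Ha Hb Hc Hab Hbc Hac.
  assert (HP := PA_pos a b c Ha Hb Hc).
  assert (HPs : PA a c b = PA a b c) by (unfold PA; ring).
  assert (E : TT a b c - TT a c b = - ((a - b) * (b - c) * (a - c) * QQ a b c) / PA a b c).
  { unfold TT, TTof, Us. rewrite HPs. unfold N0, N1, N2, N3, N4, N5, N6, QQ. field. lra. }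
  assert (HQ : 0 < QQ a b c) by (unfold QQ; pos).
  intros Heq.
  assert (X : (a - b) * (b - c) * (a - c) * QQ a b c = - (TT a b c - TT a c b) * PA a b c)
    by (rewrite E; field; lra).
  rewrite Heq, Rminus_diag in X.
  assert (X0 : (a - b) * (b - c) * (a - c) * QQ a b c = 0) by (rewrite X; ring).
  apply Rmult_integral in X0. destruct X0 as [E1|E1]; [|lra].
  apply Rmult_integral in E1. destruct E1 as [E1|E1]; [|apply Hac; lra].
  apply Rmult_integral in E1. destruct E1 as [E1|E1]; [apply Hab; lra|apply Hbc; lra].
Qed.

From Coquelicot Require Import Coquelicot.
Open Scope R_scope.

Lemma const_on (g g' : R -> R) l : 0 <= l -> (forall x, derivable_pt_lim g x (g' x)) ->
  (forall x, 0 < x < l -> g' x = 0) -> forall x, 0 <= x <= l -> g x = g 0.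
Proof.
  intros Hl Hd H0 x Hx.
  set (pr := fun y (P : 0 < y < l) => exist (fun v => derivable_pt_abs g y v) (g' y) (Hd y)).
  apply (null_derivative_loc g 0 l pr); auto.
  intros y _. apply derivable_continuous_pt. exists (g' y). apply Hd.
Qed.

Lemma quad (f f' f'' : R -> R) l : 0 <= l -> (forall x, derivable_pt_lim f x (f' x)) ->
  (forall x, derivable_pt_lim f' x (f'' x)) -> (forall x, 0 <= x <= l -> f'' x = -1) ->
  forall x, 0 <= x <= l -> f' x = f' 0 - x /\ f x = f 0 + f' 0 * x - x * x / 2.
Proof.
  intros Hl D1 D2 H x Hx.
  assert (G : forall y, 0 <= y <= l -> f' y + y = f' 0 + 0).
  { intros y Hy. apply (const_on (fun y => f' y + y) (fun y => f'' y + 1) l); auto.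
    - intros z. apply (deriv_ext (f' + id)%F _ z (f'' z + 1)); auto.
      apply derivable_pt_lim_plus; [apply D2 | apply derivable_pt_lim_id].
    - intros z Hz. rewrite H by lra. ring. }
  split. { specialize (G x Hx). lra. }
  assert (K : forall y, 0 <= y <= l -> f y - f' 0 * y + y * y / 2 = f 0 - f' 0 * 0 + 0 * 0 / 2).
  { intros y Hy.
    apply (const_on (fun y => f y - f' 0 * y + y * y / 2) (fun y => f' y - f' 0 + y) l); auto.
    - intros z.
      apply (deriv_ext ((f - mult_real_fct (f' 0) id) + mult_real_fct (/2) (id * id))%F _ z
               (f' z - f' 0 * 1 + / 2 * (1 * id z + id z * 1))).
      + intros w. unfold mult_real_fct, id. cbv. field.
      + apply derivable_pt_lim_plus; [apply derivable_pt_lim_minus|].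
        * apply D1.
        * apply derivable_pt_lim_scal, derivable_pt_lim_id.
        * apply derivable_pt_lim_scal, derivable_pt_lim_mult; apply derivable_pt_lim_id.
      + unfold id; field.
    - intros z Hz. specialize (G z ltac:(lra)). lra. }
  specialize (K x Hx). lra.
Qed.

Lemma quad_int (f : R -> R) l al be (pr : Riemann_integrable f 0 l) : 0 <= l ->
  (forall x, 0 <= x <= l -> f x = be + al * x - x * x / 2) ->
  RiemannInt pr = be * l + al * l * l / 2 - l * l * l / 6.
Proof.
  intros Hl H. rewrite <- RInt_Reals.
  rewrite (RInt_ext f (fun x => be + al * x - x * x / 2)).
  2: { intros x Hx. rewrite Rmin_left in Hx by lra. rewrite Rmax_right in Hx by lra. apply H; lra. }
  set (F := fun x => be * x + al * x * x / 2 - x * x * x / 6).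
  assert (Hi : is_RInt (fun x => be + al * x - x * x / 2) 0 l (minus (F l) (F 0))).
  { apply (is_RInt_derive F (fun x => be + al * x - x * x / 2)).
    - intros x _. unfold F. auto_derive; auto. field.
    - intros x _. apply (ex_derive_continuous (fun x => be + al * x - x * x / 2)). auto_derive; auto. }
  rewrite (is_RInt_unique _ _ _ _ Hi). unfold minus, plus, opp, F; simpl. field.
Qed.

Lemma quad_integrable l al be : Riemann_integrable (fun x => be + al * x - x * x / 2) 0 l.
Proof.
  apply ex_RInt_Reals_0.
  set (F := fun x => be * x + al * x * x / 2 - x * x * x / 6).
  exists (minus (F l) (F 0)).
  apply (is_RInt_derive F (fun x => be + al * x - x * x / 2)).
  - intros x _. unfold F. auto_derive; auto. field.
  - intros x _. apply (ex_derive_continuous (fun x => be + al * x - x * x / 2)). auto_derive; auto.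
Qed.

Lemma tor_exists_gen a b c U : 0 < a -> 0 < b -> 0 < c ->
  (forall v, (v < 7)%nat -> KR a b c U v = 0) -> torsional_rigidity_is (G1 a b c) (TTof a b c U).
Proof.
  intros Ha Hb Hc HK.
  set (be := fun e => U (src (G1 a b c) e)).
  set (al := fun e => alp a b c U e).
  exists (fun e x => be e + al e * x - x * x / 2), (fun e x => al e - x), (fun e x => -1),
    (fun e => be e * len (G1 a b c) e + al e * len (G1 a b c) e * len (G1 a b c) e / 2
              - len (G1 a b c) e * len (G1 a b c) e * len (G1 a b c) e / 6).
  split; [split; [split|split]|split].
  - intros e x. apply is_derive_Reals. auto_derive; auto; try field.
  - intros e x. apply is_derive_Reals. auto_derive; auto; try ring.
  - intros; reflexivity.
  - apply DSBC_G1_from.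
    pose proof (HK 0%nat ltac:(lia)) as K0. pose proof (HK 1%nat ltac:(lia)) as K1.
    pose proof (HK 2%nat ltac:(lia)) as K2. pose proof (HK 3%nat ltac:(lia)) as K3.
    pose proof (HK 4%nat ltac:(lia)) as K4. pose proof (HK 5%nat ltac:(lia)) as K5.
    pose proof (HK 6%nat ltac:(lia)) as K6.
    unfold KR in K0, K1, K2, K3, K4, K5, K6.
    unfold Eqs, be, al, src. cbn -[alp].
    repeat split; try lra; unfold alp; field; lra.
  - intros e He. exists (quad_integrable (len (G1 a b c) e) (al e) (be e)).
    apply quad_int.
    + cbn in He. destruct e as [|[|[|[|[|[|[|[|[|[|[|[|[|[|[|e]]]]]]]]]]]]]]]; try lia; unfold len; cbn; lra.
    + intros; reflexivity.
  - unfold TTof, be, al, src, len. cbn -[alp]. unfold alp. field. lra.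
Qed.

Lemma edge_info G u du ddu I e : torsion_solution G u du ddu -> (e < nE G)%nat ->
  (exists pr : Riemann_integrable (u e) 0 (len G e), RiemannInt pr = I e) -> 0 <= len G e ->
  u e (len G e) = u e 0 + du e 0 * len G e - len G e * len G e / 2 /\
  du e (len G e) = du e 0 - len G e /\
  I e = u e 0 * len G e + du e 0 * len G e * len G e / 2 - len G e * len G e * len G e / 6.
Proof.
  intros [[D1 D2] [Hdd _]] He [pr Hpr] Hl.
  assert (Q := quad (u e) (du e) (ddu e) (len G e) Hl (D1 e) (D2 e) (fun x Hx => Hdd e x He Hx)).
  destruct (Q (len G e) ltac:(lra)) as [Q1 Q2].
  split; [auto|split; [auto|]].
  rewrite <- Hpr. apply quad_int; auto. intros x Hx. apply Q; auto.
Qed.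

Definition Uof (u : nat -> R -> R) (v : nat) : R :=
  match v with
  | 0%nat => u 0%nat 0 | 1%nat => u 3%nat 0 | 2%nat => u 4%nat 0 | 3%nat => u 5%nat 0
  | 4%nat => u 9%nat 0 | 5%nat => u 11%nat 0 | 6%nat => u 13%nat 0 | _ => 0 end.

Lemma TTof_ext a b c U V : (forall v, (v < 7)%nat -> U v = V v) -> TTof a b c U = TTof a b c V.
Proof. intros H. unfold TTof. rewrite !H by lia. reflexivity. Qed.

Lemma tor_unique a b c T : 0 < a -> 0 < b -> 0 < c ->
  torsional_rigidity_is (G1 a b c) T -> T = TT a b c.
Proof.
  intros Ha Hb Hc [u [du [ddu [I [Hts [HI HT]]]]]].
  pose proof Hts as [_ [_ Hv]].
  apply DSBC_G1_to in Hv.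
  destruct Hv as [[C0a C0b] [[C1a C1b] [[C2a C2b] [[C3a C3b] [[C4a C4b] [[C5a C5b] [[C6a C6b]
    [[D6 [D7 [D8 [D9 [D10 [D11 [D12 [D13 D14]]]]]]]] [K0 [K1 [K2 [K3 [K4 [K5 K6]]]]]]]]]]]]]].
  Ltac ei Hts HI k V D J :=
    destruct (edge_info _ _ _ _ _ k Hts ltac:(cbn; lia) (HI k ltac:(cbn; lia)) ltac:(unfold len; cbn; lra))
      as [V [D J]]; unfold len in V, D, J; cbn in V, D, J.
  ei Hts HI 0%nat V0 Ed0 J0.
  ei Hts HI 1%nat V1 Ed1 J1.
  ei Hts HI 2%nat V2 Ed2 J2.
  ei Hts HI 3%nat V3 Ed3 J3.
  ei Hts HI 4%nat V4 Ed4 J4.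
  ei Hts HI 5%nat V5 Ed5 J5.
  ei Hts HI 6%nat V6 Ed6 J6.
  ei Hts HI 7%nat V7 Ed7 J7.
  ei Hts HI 8%nat V8 Ed8 J8.
  ei Hts HI 9%nat V9 Ed9 J9.
  ei Hts HI 10%nat V10 Ed10 J10.
  ei Hts HI 11%nat V11 Ed11 J11.
  ei Hts HI 12%nat V12 Ed12 J12.
  ei Hts HI 13%nat V13 Ed13 J13.
  ei Hts HI 14%nat V14 Ed14 J14.
  assert (A0 : du 0%nat 0 = alp a b c (Uof u) 0%nat).
  { unfold alp, Uof. rewrite <- C1a, V0. field. lra. }
  assert (A1 : du 1%nat 0 = alp a b c (Uof u) 1%nat).
  { unfold alp, Uof. rewrite <- C2a, V1, <- C0a. field. lra. }
  assert (A2 : du 2%nat 0 = alp a b c (Uof u) 2%nat).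
  { unfold alp, Uof. rewrite <- C3a, V2, <- C0b, <- C0a. field. lra. }
  assert (A3 : du 3%nat 0 = alp a b c (Uof u) 3%nat).
  { unfold alp, Uof. rewrite <- C4a, V3. field. lra. }
  assert (A4 : du 4%nat 0 = alp a b c (Uof u) 4%nat).
  { unfold alp, Uof. rewrite <- C5a, V4. field. lra. }
  assert (A5 : du 5%nat 0 = alp a b c (Uof u) 5%nat).
  { unfold alp, Uof. rewrite <- C6a, V5. field. lra. }
  assert (A6 : du 6%nat 0 = alp a b c (Uof u) 6%nat).
  { unfold alp, Uof. rewrite C1b. assert (X : u 6%nat 0 = a * a / 2 - du 6%nat 0 * a) by lra. rewrite X. field. lra. }
  assert (A7 : du 7%nat 0 = alp a b c (Uof u) 7%nat).
  { unfold alp, Uof. rewrite C2b. assert (X : u 7%nat 0 = b * b / 2 - du 7%nat 0 * b) by lra. rewrite X. field. lra. }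
  assert (A8 : du 8%nat 0 = alp a b c (Uof u) 8%nat).
  { unfold alp, Uof. rewrite C3b. assert (X : u 8%nat 0 = c * c / 2 - du 8%nat 0 * c) by lra. rewrite X. field. lra. }
  assert (A9 : du 9%nat 0 = alp a b c (Uof u) 9%nat).
  { unfold alp, Uof. assert (X : u 9%nat 0 = a * a / 2 - du 9%nat 0 * a) by lra. rewrite X. field. lra. }
  assert (A10 : du 10%nat 0 = alp a b c (Uof u) 10%nat).
  { unfold alp, Uof. rewrite C4b. assert (X : u 10%nat 0 = c * c / 2 - du 10%nat 0 * c) by lra. rewrite X. field. lra. }
  assert (A11 : du 11%nat 0 = alp a b c (Uof u) 11%nat).
  { unfold alp, Uof. assert (X : u 11%nat 0 = a * a / 2 - du 11%nat 0 * a) by lra. rewrite X. field. lra. }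
  assert (A12 : du 12%nat 0 = alp a b c (Uof u) 12%nat).
  { unfold alp, Uof. rewrite C5b. assert (X : u 12%nat 0 = b * b / 2 - du 12%nat 0 * b) by lra. rewrite X. field. lra. }
  assert (A13 : du 13%nat 0 = alp a b c (Uof u) 13%nat).
  { unfold alp, Uof. assert (X : u 13%nat 0 = b * b / 2 - du 13%nat 0 * b) by lra. rewrite X. field. lra. }
  assert (A14 : du 14%nat 0 = alp a b c (Uof u) 14%nat).
  { unfold alp, Uof. rewrite C6b. assert (X : u 14%nat 0 = c * c / 2 - du 14%nat 0 * c) by lra. rewrite X. field. lra. }
  assert (HK : forall v, (v < 7)%nat -> KR a b c (Uof u) v = 0).
  { intros v Hv. unfold KR. cbv beta zeta.
    destruct v as [|[|[|[|[|[|[|v]]]]]]]; try lia; cbv iota;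
    rewrite <- ?A0, <- ?A1, <- ?A2, <- ?A3, <- ?A4, <- ?A5, <- ?A6, <- ?A7, <- ?A8, <- ?A9,
      <- ?A10, <- ?A11, <- ?A12, <- ?A13, <- ?A14; lra. }
  assert (HU := K_uniq a b c (Uof u) (Us a b c) Ha Hb Hc HK (fun v Hv => KR_Us a b c v Ha Hb Hc Hv)).
  rewrite HT. change (nE (G1 a b c)) with 15%nat. cbn [rsum].
  rewrite J0, J1, J2, J3, J4, J5, J6, J7, J8, J9, J10, J11, J12, J13, J14.
  unfold TT. rewrite <- (TTof_ext a b c (Uof u) (Us a b c) HU).
  unfold TTof.
  rewrite A0, A1, A2, A3, A4, A5, A6, A7, A8, A9, A10, A11, A12, A13, A14.
  rewrite <- C0b, <- C0a, <- C1b, <- C2b, <- C3b, <- C4b, <- C5b, <- C6b.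
  unfold alp, Uof. field. lra.
Qed.

Theorem theorem1 (a b c : R) :
  0 < a -> 0 < b -> 0 < c -> a <> b -> b <> c -> a <> c ->
  isospectral (G1 a b c) (G2 a b c) /\
  ~ isometric (G1 a b c) (G2 a b c) /\
  ((exists T1 T2, torsional_rigidity_is (G1 a b c) T1 /\
                  torsional_rigidity_is (G2 a b c) T2) /\
   forall T1 T2, torsional_rigidity_is (G1 a b c) T1 ->
                 torsional_rigidity_is (G2 a b c) T2 -> T1 <> T2).
Proof.
  intros Ha Hb Hc Hab Hbc Hac.
  split; [apply iso_part; auto|].
  split; [apply noniso; auto|].
  split.
  - exists (TT a b c), (TT a c b). split.
    + apply tor_exists_gen; auto. intros v Hv. apply KR_Us; auto.
    + change (torsional_rigidity_is (G1 a c b) (TT a c b)).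
      apply tor_exists_gen; auto. intros v Hv. apply KR_Us; auto.
  - intros T1 T2 H1 H2.
    apply tor_unique in H1; auto.
    change (torsional_rigidity_is (G1 a c b) T2) in H2.
    apply tor_unique in H2; auto.
    subst. apply TT_neq; auto.
Qed.
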